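(* Let $f:\mathbb{R}^n\to\mathbb{R}^n$ be locally Lipschitz with $f(0)=0$ and let $V\in C^2(\mathbb{R}^n;\mathbb{R}^+)$ be a Lyapunov function for $\dot z=f(z)$. Let $r>0$ and define $q(x):=\max\{f(x)'\nabla^2V(x+hf(x))f(x):h\in[0,r]\}$. Suppose there exist constants $\delta\in(0,r]$, $\lambda\in(0,1)$ and a neighborhood $\mathcal N$ of $0$ such that $\delta q(x)\le-2(1-\lambda)\nabla V(x)f(x)$ for all $x\in\mathcal N$. Then there exists a continuous $\varphi:\mathbb{R}^n\to(0,r]$ such that $0$ is URGAS for the hybrid system (2.2) with $F(h,x):=f(x)$ (explicit Euler). More precisely, $0$ is URGAS for (2.2) with $F(h,x)=f(x)$ whenever $\varphi:\mathbb{R}^n\to(0,r]$ is continuous and satisfies $\varphi(x)q(x)\le-2(1-\lambda)\nabla V(x)f(x)$ for all $x\in\mathbb{R}^n$.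
   Context: The hybrid system (2.2) with $F(h,x)=f(x)$: for each locally bounded $u:\mathbb{R}^+\to\mathbb{R}^+$ and $x_0$, $\tau_0=0$, $x(0)=x_0$, $h_i=\varphi(x(\tau_i))\exp(-u(\tau_i))$, $\tau_{i+1}=\tau_i+h_i$, $x(t)=x(\tau_i)+(t-\tau_i)f(x(\tau_i))$ on $[\tau_i,\tau_{i+1}]$; denote the solution $x(t,x_0;u)$. URGAS: (a) for every $\varepsilon>0$ there is $\delta'>0$ with $|x_0|<\delta'\Rightarrow|x(t,x_0;u)|<\varepsilon$ for all $t\ge0$ and all $u$; (b) for every $R$, $\sup\{|x(t,x_0;u)|:t\ge0,|x_0|\le R,u\}<\infty$; (c) for all $\varepsilon,R$ there is $T$ with $|x(t,x_0;u)|\le\varepsilon$ for $t\ge T$, $|x_0|\le R$, all locally bounded $u\ge0$. A Lyapunov function for $\dot z=f(z)$ is a positive definite, radially unbounded $C^1$ function $V$ with $\nabla V(x)f(x)<0$ for $x\ne0$. $\nabla^2V$ is the Hessian. *)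

(* Defs.v *)
From mathcomp Require Import ssreflect ssrfun ssrbool eqtype ssrnat seq choice fintype.
From Stdlib Require Import Reals.

Set Implicit Arguments.
Local Open Scope R_scope.

Definition vec (n : nat) := 'I_n -> R.

Definition vzero {n} : vec n := fun _ => 0.
Definition vadd {n} (x y : vec n) : vec n := fun i => x i + y i.
Definition vsub {n} (x y : vec n) : vec n := fun i => x i - y i.
Definition vscale {n} (a : R) (x : vec n) : vec n := fun i => a * x i.

Definition vsum {n} (F : 'I_n -> R) : R := foldr Rplus 0 (map F (enum 'I_n)).

Definition dot {n} (x y : vec n) : R := vsum (fun i => x i * y i).
Definition vnorm {n} (x : vec n) : R := sqrt (dot x x).

Definition vcont {n} (g : vec n -> R) : Prop :=
  forall x eps, 0 < eps -> exists d, 0 < d /\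
    forall y, vnorm (vsub y x) < d -> Rabs (g y - g x) < eps.

Definition loc_lipschitz {n} (f : vec n -> vec n) : Prop :=
  forall x, exists eps L, 0 < eps /\ 0 <= L /\
    forall y z, vnorm (vsub y x) < eps -> vnorm (vsub z x) < eps ->
      vnorm (vsub (f y) (f z)) <= L * vnorm (vsub y z).

Definition has_gradient {n} (F : vec n -> R) (G : vec n -> vec n) : Prop :=
  forall x eps, 0 < eps -> exists d, 0 < d /\
    forall y, vnorm (vsub y x) < d ->
      Rabs (F y - F x - dot (G x) (vsub y x)) <= eps * vnorm (vsub y x).

Definition C2_with {n} (V : vec n -> R) (gV : vec n -> vec n)
    (HV : vec n -> 'I_n -> vec n) : Prop :=
  has_gradient V gV /\
  (forall i, has_gradient (fun x => gV x i) (fun x => HV x i)) /\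
  (forall i j, vcont (fun x => HV x i j)).

Definition lyapunov {n} (f : vec n -> vec n) (V : vec n -> R) (gV : vec n -> vec n) : Prop :=
  V vzero = 0 /\
  (forall x, x <> vzero -> 0 < V x) /\
  (forall M, exists Rr, forall x, Rr <= vnorm x -> M <= V x) /\
  (forall x, x <> vzero -> dot (gV x) (f x) < 0).

Definition quadform {n} (A : 'I_n -> vec n) (v : vec n) : R :=
  dot v (fun i => dot (A i) v).

Definition is_max (S : R -> Prop) (m : R) : Prop :=
  S m /\ forall y, S y -> y <= m.

Definition admissible_input (u : R -> R) : Prop :=
  (forall t, 0 <= t -> 0 <= u t) /\
  (forall T, 0 <= T -> exists M, forall t, 0 <= t <= T -> u t <= M).

(* sampling instants and states of the hybrid system (2.2), F(h,x) = f(x):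
   hstate i = (tau_i, x(tau_i)) *)
Fixpoint hstate {n} (phi : vec n -> R) (f : vec n -> vec n) (u : R -> R)
    (x0 : vec n) (i : nat) : R * vec n :=
  match i with
  | O => (0, x0)
  | S k =>
      let (tk, xk) := hstate phi f u x0 k in
      let hk := phi xk * exp (- u tk) in
      (tk + hk, vadd xk (vscale hk (f xk)))
  end.

Definition sol_at {n} (phi : vec n -> R) (f : vec n -> vec n) (u : R -> R)
    (x0 : vec n) (t : R) (y : vec n) : Prop :=
  exists i,
    fst (hstate phi f u x0 i) <= t <= fst (hstate phi f u x0 (S i)) /\
    y = vadd (snd (hstate phi f u x0 i))
             (vscale (t - fst (hstate phi f u x0 i)) (f (snd (hstate phi f u x0 i)))).

Definition URGAS {n} (phi : vec n -> R) (f : vec n -> vec n) : Prop :=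
  (forall eps, 0 < eps -> exists d, 0 < d /\
     forall x0 u t y, admissible_input u -> vnorm x0 < d -> 0 <= t ->
       sol_at phi f u x0 t y -> vnorm y < eps) /\
  (forall Rr, 0 <= Rr -> exists M,
     forall x0 u t y, admissible_input u -> vnorm x0 <= Rr -> 0 <= t ->
       sol_at phi f u x0 t y -> vnorm y <= M) /\
  (forall eps Rr, 0 < eps -> 0 <= Rr -> exists T,
     forall x0 u t y, admissible_input u -> vnorm x0 <= Rr -> T <= t ->
       sol_at phi f u x0 t y -> vnorm y <= eps).

(* Main.v *)
Require Import Defs.
From mathcomp Require Import ssreflect ssrfun ssrbool eqtype ssrnat seq choice fintype.
From Stdlib Require Import Reals.
From Stdlib Require Import Lra Lia Psatz Classical ClassicalEpsilon FunctionalExtensionality Rtopology.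
Local Open Scope R_scope.

Definition lsum {n} (s : seq 'I_n) (F : 'I_n -> R) := foldr Rplus 0 (map F s).

Lemma mem_enum_ord n (i:'I_n) : i \in enum 'I_n.
Proof. by rewrite mem_enum. Qed.

Lemma lsum_nil n (F : 'I_n -> R) : lsum [::] F = 0.
Proof. reflexivity. Qed.
Lemma lsum_cons n a s (F : 'I_n -> R) : lsum (a :: s) F = F a + lsum s F.
Proof. reflexivity. Qed.

Lemma lsum_ext n s (F G : 'I_n -> R) : (forall i, F i = G i) -> lsum s F = lsum s G.
Proof. intro H; induction s as [|a s IH]; [reflexivity|rewrite !lsum_cons H IH; reflexivity]. Qed.

Lemma lsum_plus n s (F G : 'I_n -> R) : lsum s (fun i => F i + G i) = lsum s F + lsum s G.
Proof. induction s as [|a s IH]; rewrite ?lsum_nil ?lsum_cons; [lra|rewrite IH; lra]. Qed.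

Lemma lsum_scal n s (F : 'I_n -> R) c : lsum s (fun i => c * F i) = c * lsum s F.
Proof. induction s as [|a s IH]; rewrite ?lsum_nil ?lsum_cons; [lra|rewrite IH; lra]. Qed.

Lemma lsum_le n s (F G : 'I_n -> R) : (forall i, F i <= G i) -> lsum s F <= lsum s G.
Proof. intro H; induction s as [|a s IH]; rewrite ?lsum_nil ?lsum_cons; [lra|specialize (H a); lra]. Qed.

Lemma lsum_zero n s : lsum s (fun _ : 'I_n => 0) = 0.
Proof. induction s as [|a s IH]; rewrite ?lsum_nil ?lsum_cons; [lra|rewrite IH; lra]. Qed.

Lemma lsum_nonneg n s (F : 'I_n -> R) : (forall i, 0 <= F i) -> 0 <= lsum s F.
Proof. intro H; rewrite -(lsum_zero n s); apply lsum_le; auto. Qed.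

Lemma lsum_abs n s (F : 'I_n -> R) : Rabs (lsum s F) <= lsum s (fun i => Rabs (F i)).
Proof. induction s as [|a s IH]; rewrite ?lsum_nil ?lsum_cons.
 - rewrite Rabs_R0; lra.
 - eapply Rle_trans; [apply Rabs_triang|lra]. Qed.

Lemma lsum_term n s (F : 'I_n -> R) i : (forall j, 0 <= F j) -> i \in s -> F i <= lsum s F.
Proof. intros H; induction s as [|a s IH]; [done|]. rewrite in_cons lsum_cons.
 move=> /orP [/eqP ->|Hi].
 - have := lsum_nonneg n s F H; lra.
 - have := IH Hi; have := H a; lra. Qed.

Lemma lsum_sq n s (F : 'I_n -> R) :
  lsum s (fun i => F i * F i) <= (lsum s (fun i => Rabs (F i))) * (lsum s (fun i => Rabs (F i))).
Proof. induction s as [|a s IH]; rewrite ?lsum_nil ?lsum_cons; [lra|].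
 have h1 := lsum_nonneg n s (fun i => Rabs (F i)) (fun i => Rabs_pos (F i)).
 have h2 := Rabs_pos (F a). have h3: F a * F a = Rabs (F a) * Rabs (F a).
 { rewrite -Rabs_mult. symmetry; apply Rabs_right. nra. }
 nra. Qed.

Lemma CV_const c : Un_cv (fun _ => c) c.
Proof. intros e He; exists 0%nat; intros; unfold Rdist; rewrite Rminus_eq_0 Rabs_R0; lra. Qed.

Lemma lsum_cv n s (F : nat -> 'I_n -> R) L :
  (forall i, Un_cv (fun k => F k i) (L i)) -> Un_cv (fun k => lsum s (F k)) (lsum s L).
Proof. intro H; induction s as [|a s IH].
 - rewrite lsum_nil; apply (Un_cv_ext (fun _ => 0)); [intro; reflexivity| apply CV_const].
 - rewrite lsum_cons; apply (Un_cv_ext (fun k => F k a + lsum s (F k))); [intro; reflexivity|].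
   apply CV_plus; auto. Qed.


Lemma dot_lsum n (x y : vec n) : dot x y = lsum (enum 'I_n) (fun i => x i * y i).
Proof. reflexivity. Qed.

Lemma dot_comm n (x y : vec n) : dot x y = dot y x.
Proof. rewrite !dot_lsum; apply lsum_ext => i; lra. Qed.

Lemma dot_addl n (x y z : vec n) : dot (vadd x y) z = dot x z + dot y z.
Proof. rewrite !dot_lsum -lsum_plus; apply lsum_ext => i; rewrite /vadd; lra. Qed.

Lemma dot_scall n a (x y : vec n) : dot (vscale a x) y = a * dot x y.
Proof. rewrite !dot_lsum -lsum_scal; apply lsum_ext => i; rewrite /vscale; lra. Qed.

Lemma dot_subl n (x y z : vec n) : dot (vsub x y) z = dot x z - dot y z.
Proof. have -> : vsub x y = vadd x (vscale (-1) y).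
 { apply functional_extensionality => i; rewrite /vsub /vadd /vscale; lra. }
 rewrite dot_addl dot_scall; lra. Qed.

Lemma dot_addr n (x y z : vec n) : dot z (vadd x y) = dot z x + dot z y.
Proof. rewrite dot_comm dot_addl (dot_comm _ x) (dot_comm _ y); reflexivity. Qed.
Lemma dot_subr n (x y z : vec n) : dot z (vsub x y) = dot z x - dot z y.
Proof. rewrite dot_comm dot_subl (dot_comm _ x) (dot_comm _ y); reflexivity. Qed.
Lemma dot_scalr n a (x y : vec n) : dot y (vscale a x) = a * dot y x.
Proof. rewrite dot_comm dot_scall (dot_comm _ x); reflexivity. Qed.

Lemma dot_pos n (x : vec n) : 0 <= dot x x.
Proof. rewrite dot_lsum; apply lsum_nonneg => i; nra. Qed.

Lemma dot_zerol n (y : vec n) : dot vzero y = 0.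
Proof. rewrite dot_lsum -(lsum_zero n (enum 'I_n)); apply lsum_ext => i; rewrite /vzero; lra. Qed.

Lemma disc_aux a b c : 0 < c -> 0 <= a - 2*(b/c)*b + b/c*(b/c)*c -> b*b <= a*c.
Proof. intros Hc H.
 have H2 : 0 <= (a - 2 * (b / c) * b + b / c * (b / c) * c) * c by apply Rmult_le_pos; lra.
 have E : (a - 2 * (b / c) * b + b / c * (b / c) * c) * c = a * c - b * b by field; lra.
 lra. Qed.

Lemma CS_sq n (x y : vec n) : dot x y * dot x y <= dot x x * dot y y.
Proof.
 have key : forall t, 0 <= dot x x - 2 * t * dot x y + t * t * dot y y.
 { intro t. have := dot_pos n (vsub x (vscale t y)).
   rewrite !dot_subl !dot_subr !dot_scall !dot_scalr (dot_comm _ y x). lra. }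
 have hx := dot_pos n x. have hy := dot_pos n y.
 destruct (Rle_lt_or_eq_dec 0 (dot y y) hy) as [Hc|Hc].
 - exact (disc_aux _ _ _ Hc (key (dot x y / dot y y))).
 - rewrite -Hc. destruct (Req_dec (dot x y) 0) as [Hb|Hb]; [rewrite Hb; lra|].
   exfalso. have := key ((dot x x + 1) / (2 * dot x y)). rewrite -Hc.
   have -> : dot x x - 2 * ((dot x x + 1) / (2 * dot x y)) * dot x y +
      (dot x x + 1) / (2 * dot x y) * ((dot x x + 1) / (2 * dot x y)) * 0 = -1 by field.
   lra. Qed.

Lemma vnorm_pos n (x : vec n) : 0 <= vnorm x.
Proof. apply sqrt_pos. Qed.

Lemma vnorm_sq n (x : vec n) : vnorm x * vnorm x = dot x x.
Proof. apply sqrt_sqrt, dot_pos. Qed.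

Lemma sq_le_le a b : 0 <= a -> 0 <= b -> a * a <= b * b -> a <= b.
Proof. intros; nra. Qed.

Lemma CS n (x y : vec n) : Rabs (dot x y) <= vnorm x * vnorm y.
Proof. apply sq_le_le; [apply Rabs_pos| apply Rmult_le_pos; apply vnorm_pos|].
 have -> : Rabs (dot x y) * Rabs (dot x y) = dot x y * dot x y.
 { rewrite -Rabs_mult Rabs_right //; nra. }
 have -> : vnorm x * vnorm y * (vnorm x * vnorm y) = (vnorm x * vnorm x) * (vnorm y * vnorm y) by ring.
 rewrite !vnorm_sq; apply CS_sq. Qed.

Lemma dot_le n (x y : vec n) : dot x y <= vnorm x * vnorm y.
Proof. have := CS n x y; have := Rle_abs (dot x y); lra. Qed.

Lemma vnorm_scale n a (x : vec n) : vnorm (vscale a x) = Rabs a * vnorm x.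
Proof. apply Rle_antisym; apply sq_le_le; try (apply Rmult_le_pos); try apply vnorm_pos; try apply Rabs_pos;
 rewrite vnorm_sq dot_scall dot_scalr;
 (have -> : Rabs a * vnorm x * (Rabs a * vnorm x) = (Rabs a * Rabs a) * (vnorm x * vnorm x) by ring);
 rewrite vnorm_sq -Rabs_mult Rabs_right; try nra; lra. Qed.

Lemma vnorm_triang n (x y : vec n) : vnorm (vadd x y) <= vnorm x + vnorm y.
Proof. apply sq_le_le; [apply vnorm_pos| have := vnorm_pos n x; have := vnorm_pos n y; lra|].
 rewrite vnorm_sq dot_addl !dot_addr (dot_comm _ y x).
 have := dot_le n x y. have := vnorm_sq n x. have := vnorm_sq n y. nra. Qed.

Lemma vsub_split n (x y z : vec n) : vsub x z = vadd (vsub x y) (vsub y z).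
Proof. apply functional_extensionality => i; rewrite /vsub /vadd; lra. Qed.

Lemma vnorm_triang_sub n (x y z : vec n) : vnorm (vsub x z) <= vnorm (vsub x y) + vnorm (vsub y z).
Proof. rewrite (vsub_split n x y z); apply vnorm_triang. Qed.

Lemma vnorm_sub_sym n (x y : vec n) : vnorm (vsub x y) = vnorm (vsub y x).
Proof. have -> : vsub x y = vscale (-1) (vsub y x).
 { apply functional_extensionality => i; rewrite /vsub /vscale; lra. }
 rewrite vnorm_scale Rabs_Ropp Rabs_R1; lra. Qed.

Lemma vnorm_zero n : vnorm (@vzero n) = 0.
Proof. rewrite /vnorm dot_zerol sqrt_0 //. Qed.

Lemma vsub_zero n (x : vec n) : vsub x vzero = x.
Proof. apply functional_extensionality => i; rewrite /vsub /vzero; lra. Qed.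

Lemma coord_le n (x : vec n) i : Rabs (x i) <= vnorm x.
Proof. apply sq_le_le; [apply Rabs_pos|apply vnorm_pos|]. rewrite vnorm_sq -Rabs_mult Rabs_right; [|nra].
 rewrite dot_lsum. apply (lsum_term n _ (fun i => x i * x i)); [intro; nra| apply mem_enum_ord]. Qed.

Lemma vnorm_le_sum n (x : vec n) : vnorm x <= lsum (enum 'I_n) (fun i => Rabs (x i)).
Proof. apply sq_le_le; [apply vnorm_pos| apply lsum_nonneg => i; apply Rabs_pos|].
 rewrite vnorm_sq dot_lsum; apply lsum_sq. Qed.

Lemma vadd_sub n (x y : vec n) : vsub (vadd x y) x = y.
Proof. apply functional_extensionality => i; rewrite /vsub /vadd; lra. Qed.


Definition vcv {n} (y : nat -> vec n) (x : vec n) := Un_cv (fun k => vnorm (vsub (y k) x)) 0.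
Definition scont {n} (g : vec n -> R) x := forall y, vcv y x -> Un_cv (fun k => g (y k)) (g x).
Definition svcont {n} (F : vec n -> vec n) x := forall y, vcv y x -> vcv (fun k => F (y k)) (F x).
Definition ctsat {n} (g : vec n -> R) x := forall eps, 0 < eps -> exists d, 0 < d /\
    forall y, vnorm (vsub y x) < d -> Rabs (g y - g x) < eps.

Lemma abs_le_inv x a : Rabs x <= a -> -a <= x <= a.
Proof. unfold Rabs; destruct (Rcase_abs x); lra. Qed.

Lemma squeeze (a b : nat -> R) : (forall k, 0 <= a k <= b k) -> Un_cv b 0 -> Un_cv a 0.
Proof. intros H Hb e He. destruct (Hb e He) as [N HN]. exists N => k Hk.
 have h1 := HN k Hk. have h2 := H k. unfold Rdist in *. rewrite !Rminus_0_r in h1 *.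
 rewrite Rabs_right in h1; [|lra]. rewrite Rabs_right; lra. Qed.

Lemma Un_cv_0 (a : nat -> R) l : Un_cv a l <-> Un_cv (fun k => Rabs (a k - l)) 0.
Proof. split => H e He; destruct (H e He) as [N HN]; exists N => k Hk; have := HN k Hk;
 unfold Rdist; rewrite Rminus_0_r Rabs_Rabsolu //. Qed.

Lemma vcv_coord n (y : nat -> vec n) x i : vcv y x -> Un_cv (fun k => y k i) (x i).
Proof. intro H. refine (proj2 (Un_cv_0 _ _) _). apply (squeeze _ _ (fun k => conj (Rabs_pos _) (coord_le n (vsub (y k) x) i)) H). Qed.

Lemma coord_vcv n (y : nat -> vec n) x : (forall i, Un_cv (fun k => y k i) (x i)) -> vcv y x.
Proof. intro H. apply (squeeze _ (fun k => lsum (enum 'I_n) (fun i => Rabs (vsub (y k) x i)))).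
 - intro k; split; [apply vnorm_pos| apply vnorm_le_sum].
 - rewrite -(lsum_zero n (enum 'I_n)). apply lsum_cv => i. exact (proj1 (Un_cv_0 (fun k => y k i) (x i)) (H i)). Qed.

Lemma ctsat_scont n (g : vec n -> R) x : ctsat g x -> scont g x.
Proof. intros H y Hy e He. destruct (H e He) as [d [Hd Hg]]. destruct (Hy d Hd) as [N HN].
 exists N => k Hk. have := HN k Hk. unfold Rdist. rewrite Rminus_0_r Rabs_right; [|apply Rle_ge, vnorm_pos].
 apply Hg. Qed.

Lemma my_choice {A} (Q : nat -> A -> Prop) : (forall k, exists x, Q k x) -> exists y, forall k, Q k (y k).
Proof. intro H. exists (fun k => proj1_sig (constructive_indefinite_description _ (H k))).
 intro k; exact (proj2_sig (constructive_indefinite_description _ (H k))). Qed.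

Lemma inv_small e : 0 < e -> exists N, forall k, (N <= k)%coq_nat -> / (INR k + 1) < e.
Proof. intro He. destruct (archimed_cor1 e He) as [N [HN HN0]]. exists N => k Hk.
 apply Rle_lt_trans with (/ INR N); [|exact HN]. apply Rinv_le_contravar.
 - apply lt_0_INR; lia.
 - have := le_INR _ _ Hk; lra. Qed.

Lemma inv_pos k : 0 < / (INR k + 1).
Proof. apply Rinv_0_lt_compat. have := pos_INR k; lra. Qed.

Lemma scont_ctsat n (g : vec n -> R) x : scont g x -> ctsat g x.
Proof. intros H e He. apply NNPP => Hn.
 have Hk : forall k, exists y, vnorm (vsub y x) < / (INR k + 1) /\ e <= Rabs (g y - g x).
 { intro k. apply NNPP => Hk. apply Hn. exists (/ (INR k + 1)); split; [apply inv_pos|].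
   intros y Hy. apply Rnot_le_lt => Hle. apply Hk; exists y; auto. }
 destruct (my_choice _ Hk) as [y Hy].
 have Hcv : vcv y x.
 { intros e' He'. destruct (inv_small e' He') as [N HN]. exists N => k Hk'.
   unfold Rdist; rewrite Rminus_0_r Rabs_right; [|apply Rle_ge, vnorm_pos].
   have := HN k Hk'; have := proj1 (Hy k); lra. }
 destruct (H y Hcv e He) as [N HN]. have := HN N (le_n N). have := proj2 (Hy N). unfold Rdist. lra. Qed.

Lemma dot_cv n (a b : nat -> vec n) A B : vcv a A -> vcv b B ->
  Un_cv (fun k => dot (a k) (b k)) (dot A B).
Proof. intros Ha Hb. rewrite /dot /vsum. apply (lsum_cv n (enum 'I_n) (fun k i => a k i * b k i)).
 intro i. apply CV_mult; apply vcv_coord; auto. Qed.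

Lemma vadd_cv n (a b : nat -> vec n) A B : vcv a A -> vcv b B -> vcv (fun k => vadd (a k) (b k)) (vadd A B).
Proof. intros Ha Hb; apply coord_vcv => i; rewrite /vadd; apply CV_plus; apply vcv_coord; auto. Qed.

Lemma vscale_cv n (c : nat -> R) (a : nat -> vec n) C A : Un_cv c C -> vcv a A ->
  vcv (fun k => vscale (c k) (a k)) (vscale C A).
Proof. intros Hc Ha; apply coord_vcv => i; rewrite /vscale; apply CV_mult; [auto| apply vcv_coord; auto]. Qed.

Lemma vconst_cv n (A : vec n) : vcv (fun _ => A) A.
Proof. apply coord_vcv => i; apply CV_const. Qed.

Lemma vnorm_cv n (y : nat -> vec n) x : vcv y x -> Un_cv (fun k => vnorm (y k)) (vnorm x).
Proof. intro H. refine (proj2 (Un_cv_0 _ _) _). refine (squeeze _ _ _ H). intro k. split; [apply Rabs_pos|].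
 have h1 := vnorm_triang_sub n (y k) x vzero. have h2 := vnorm_triang_sub n x (y k) vzero.
 rewrite !vsub_zero in h1 h2. rewrite (vnorm_sub_sym n x) in h2.
 apply Rabs_le; lra. Qed.

Lemma Rle_cv_lim_c (u : nat -> R) l b : (forall k, u k <= b) -> Un_cv u l -> l <= b.
Proof. intros H Hu. eapply Rle_cv_lim; [exact H| exact Hu| apply CV_const]. Qed.
Lemma Rge_cv_lim_c (u : nat -> R) l b : (forall k, b <= u k) -> Un_cv u l -> b <= l.
Proof. intros H Hu. eapply Rle_cv_lim; [exact H| apply CV_const| exact Hu]. Qed.

Definition incr (phi : nat -> nat) := forall k, (phi k < phi (S k))%coq_nat.

Lemma incr_ge phi : incr phi -> forall k, (k <= phi k)%coq_nat.
Proof. intros H k; induction k; [lia| have := H k; lia]. Qed.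

Lemma incr_strict phi : incr phi -> forall a b, (a < b)%coq_nat -> (phi a < phi b)%coq_nat.
Proof. intros H a b Hab; induction b; [lia|]. destruct (Nat.eq_dec a b) as [->|Hne]; [apply H|].
 have := IHb ltac:(lia); have := H b; lia. Qed.

Lemma incr_comp phi psi : incr phi -> incr psi -> incr (fun k => phi (psi k)).
Proof. intros H1 H2 k; apply incr_strict; auto. Qed.

Lemma Un_cv_sub (u : nat -> R) l phi : incr phi -> Un_cv u l -> Un_cv (fun k => u (phi k)) l.
Proof. intros Hp Hu e He; destruct (Hu e He) as [N HN]; exists N => k Hk; apply HN.
 have := incr_ge phi Hp k; lia. Qed.

Lemma vcv_sub n (y : nat -> vec n) x phi : incr phi -> vcv y x -> vcv (fun k => y (phi k)) x.
Proof. intros Hp H; exact (Un_cv_sub _ _ _ Hp H). Qed.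

Lemma io_subseq (P : nat -> nat -> Prop) : (forall m N, exists k, (N <= k)%coq_nat /\ P m k) ->
  exists phi, incr phi /\ forall m, P m (phi m).
Proof. intro H.
 have H' : forall p : nat * nat, exists k, (snd p <= k)%coq_nat /\ P (fst p) k by intros [m N]; apply H.
 pose pick := fun p => proj1_sig (constructive_indefinite_description _ (H' p)).
 have Hpick : forall p, (snd p <= pick p)%coq_nat /\ P (fst p) (pick p)
   by intro p; exact (proj2_sig (constructive_indefinite_description _ (H' p))).
 pose phi := fix phi m := match m with O => pick (0%nat, 0%nat) | S m' => pick (S m', S (phi m')) end.
 exists phi; split.
 - intro k. simpl. have := proj1 (Hpick (S k, S (phi k))). simpl. lia.
 - intro m. destruct m; simpl; [exact (proj2 (Hpick (0%nat,0%nat)))| exact (proj2 (Hpick (S m, S (phi m))))]. Qed.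

Lemma BW1 (u : nat -> R) a b : (forall k, a <= u k <= b) ->
  exists phi l, incr phi /\ Un_cv (fun k => u (phi k)) l /\ a <= l <= b.
Proof. intro H. destruct (Bolzano_Weierstrass u (fun c => a <= c <= b) (compact_P3 a b) H) as [l Hl].
 have Hio : forall m N, exists k, (N <= k)%coq_nat /\ Rabs (u k - l) < / (INR m + 1).
 { intros m N. destruct (Hl (disc l (mkposreal _ (inv_pos m))) N) as [p [Hp Hv]].
   - exists (mkposreal _ (inv_pos m)); intros z Hz; exact Hz.
   - exists p; split; auto. }
 destruct (io_subseq _ Hio) as [phi [Hphi Hp]].
 have Hcv : Un_cv (fun k => u (phi k)) l.
 { intros e He; destruct (inv_small e He) as [N HN]; exists N => k Hk; unfold Rdist.
   have := HN k Hk; have := Hp k; lra. }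
 exists phi, l; split; [|split]; auto. split.
 - apply (Rge_cv_lim_c _ _ _ (fun k => proj1 (H (phi k))) Hcv).
 - apply (Rle_cv_lim_c _ _ _ (fun k => proj2 (H (phi k))) Hcv). Qed.

Lemma compact_list n (y : nat -> vec n) R0 (s : seq 'I_n) : (forall k, vnorm (y k) <= R0) ->
  exists phi L, incr phi /\ forall i, i \in s -> Un_cv (fun k => y (phi k) i) (L i).
Proof. intro Hb. induction s as [|i s IH].
 - exists (fun k => k), vzero; split; [intro k; lia| done].
 - destruct IH as [phi [L [Hphi HL]]].
   have Hbd : forall k, -R0 <= y (phi k) i <= R0.
   { intro k; have := coord_le n (y (phi k)) i; have := Hb (phi k); intros; apply abs_le_inv; lra. }
   destruct (BW1 _ _ _ Hbd) as [psi [l [Hpsi [Hl _]]]].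
   exists (fun k => phi (psi k)), (fun j => if j == i then l else L j); split; [apply incr_comp; auto|].
   intros j Hj. destruct (j == i) eqn:E.
   + move/eqP: E => ->. exact Hl.
   + rewrite in_cons E /= in Hj. exact (Un_cv_sub _ _ _ Hpsi (HL j Hj)). Qed.

Lemma compact_seq n (y : nat -> vec n) R0 : (forall k, vnorm (y k) <= R0) ->
  exists phi L, incr phi /\ vcv (fun k => y (phi k)) L.
Proof. intro Hb. destruct (compact_list n y R0 (enum 'I_n) Hb) as [phi [L [Hp HL]]].
 exists phi, L; split; auto. apply coord_vcv => i; apply HL, mem_enum_ord. Qed.


Lemma squeeze_ev (a b : nat -> R) N : (forall k, (N <= k)%coq_nat -> 0 <= a k <= b k) -> Un_cv b 0 -> Un_cv a 0.
Proof. intros H Hb e He. destruct (Hb e He) as [N2 HN]. exists (Nat.max N N2) => k Hk.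
 have h1 := HN k ltac:(lia). have h2 := H k ltac:(lia). unfold Rdist in *. rewrite !Rminus_0_r in h1 *.
 rewrite Rabs_right in h1; [|lra]. rewrite Rabs_right; lra. Qed.

Lemma loclip_svcont n (f : vec n -> vec n) x : loc_lipschitz f -> svcont f x.
Proof. intros Hf y Hy. destruct (Hf x) as [e [L [He [HL Hlip]]]].
 destruct (Hy e He) as [N HN].
 apply (squeeze_ev _ (fun k => L * vnorm (vsub (y k) x)) N).
 - intros k Hk. split; [apply vnorm_pos|].
   have Hxx : vnorm (vsub x x) < e.
   { rewrite (_ : vsub x x = vzero); [rewrite vnorm_zero; lra|].
     apply functional_extensionality => i; rewrite /vsub /vzero; lra. }
   apply Hlip; [|exact Hxx].
   have := HN k Hk. unfold Rdist. rewrite Rminus_0_r Rabs_right //. apply Rle_ge, vnorm_pos.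
 - rewrite -(Rmult_0_r L). apply CV_mult; [apply CV_const| exact Hy]. Qed.

Lemma grad_ctsat n (F : vec n -> R) G x : has_gradient F G -> ctsat F x.
Proof. intros HF e He. destruct (HF x 1 Rlt_0_1) as [d [Hd H1]].
 set K := vnorm (G x) + 1.
 have HK : 0 < K by have := vnorm_pos n (G x); rewrite /K; lra.
 exists (Rmin d (e / K)); split. { apply Rmin_pos; [lra| apply Rdiv_lt_0_compat; lra]. }
 intros y Hy. have Hy1 : vnorm (vsub y x) < d by have := Rmin_l d (e / K); lra.
 have Hy2 : vnorm (vsub y x) < e / K by have := Rmin_r d (e / K); lra.
 have := H1 y Hy1. have := CS n (G x) (vsub y x). intros hc h.
 have h3 : vnorm (vsub y x) * K < e.
 { apply (Rmult_lt_reg_r (/ K)); [apply Rinv_0_lt_compat; lra|]. rewrite Rmult_assoc Rinv_r; lra. }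
 have hp := vnorm_pos n (vsub y x). have hg := vnorm_pos n (G x).
 have h4 : Rabs (F y - F x) <= Rabs (F y - F x - dot (G x) (vsub y x)) + Rabs (dot (G x) (vsub y x)).
 { have E : F y - F x = (F y - F x - dot (G x) (vsub y x)) + dot (G x) (vsub y x) by ring.
   rewrite {1}E. apply Rabs_triang. }
 rewrite /K in h3. nra. Qed.

Lemma grad_scont n (F : vec n -> R) G x : has_gradient F G -> scont F x.
Proof. intro H; apply ctsat_scont, (grad_ctsat n F G x H). Qed.

Lemma comp_svcont n (F : vec n -> vec n) x : (forall i, scont (fun y => F y i) x) -> svcont F x.
Proof. intros H y Hy. apply coord_vcv => i. exact (H i y Hy). Qed.

Lemma vcont_scont n (g : vec n -> R) x : vcont g -> scont g x.
Proof. intro H; apply ctsat_scont; exact (H x). Qed.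

Lemma line_sub n (x v : vec n) t h : vsub (vadd x (vscale (t + h) v)) (vadd x (vscale t v)) = vscale h v.
Proof. apply functional_extensionality => i; rewrite /vsub /vadd /vscale; ring. Qed.

Lemma line_0 n (x v : vec n) : vadd x (vscale 0 v) = x.
Proof. apply functional_extensionality => i; rewrite /vadd /vscale; ring. Qed.

Lemma grad_line n (F : vec n -> R) G (x v : vec n) t : has_gradient F G ->
  derivable_pt_lim (fun s => F (vadd x (vscale s v))) t (dot (G (vadd x (vscale t v))) v).
Proof. intros HF eps Heps. set z := vadd x (vscale t v). set K := vnorm v + 1.
 have HK : 0 < K by have := vnorm_pos n v; rewrite /K; lra.
 destruct (HF z (eps / (2 * K))) as [d [Hd Hz]]. { apply Rdiv_lt_0_compat; lra. }
 have Hdel : 0 < d / K by apply Rdiv_lt_0_compat; lra.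
 exists (mkposreal _ Hdel) => h Hh0 Hh. simpl in Hh.
 have Hsub := line_sub n x v t h. fold z in Hsub.
 have Hn : vnorm (vsub (vadd x (vscale (t + h) v)) z) < d.
 { rewrite Hsub vnorm_scale. have := vnorm_pos n v. have := Rabs_pos h.
   have : Rabs h * K < d.
   { apply (Rmult_lt_reg_r (/ K)); [apply Rinv_0_lt_compat; lra|]. rewrite Rmult_assoc Rinv_r; lra. }
   rewrite /K; nra. }
 have H1 := Hz _ Hn. rewrite Hsub vnorm_scale dot_scalr in H1.
 set A := F (vadd x (vscale (t + h) v)) - F z - h * dot (G z) v.
 fold A in H1.
 have -> : (F (vadd x (vscale (t + h) v)) - F (vadd x (vscale t v))) / h - dot (G z) v = A * / h.
 { rewrite /A /z. field. exact Hh0. }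
 rewrite Rabs_mult Rabs_inv.
 have Hah : 0 < Rabs h by apply Rabs_pos_lt.
 have : Rabs A * / Rabs h <= eps / (2 * K) * vnorm v.
 { apply (Rmult_le_reg_r (Rabs h)); [lra|]. rewrite Rmult_assoc Rinv_l; [|lra].
   have := vnorm_pos n v. nra. }
 have : eps / (2 * K) * vnorm v < eps.
 { have -> : eps / (2 * K) * vnorm v = eps * (vnorm v / (2 * K)) by field; lra.
   have : vnorm v / (2 * K) < 1.
   { apply (Rmult_lt_reg_r (2 * K)); [lra|]. have -> : vnorm v / (2 * K) * (2 * K) = vnorm v by field; lra.
     rewrite /K; have := vnorm_pos n v; lra. }
   have : 0 <= vnorm v / (2 * K) by apply Rmult_le_pos; [apply vnorm_pos| apply Rlt_le, Rinv_0_lt_compat; lra]. nra. }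
 lra. Qed.

Lemma deriv_val f x l l' : derivable_pt_lim f x l -> l = l' -> derivable_pt_lim f x l'.
Proof. intros H ->; exact H. Qed.

Lemma lsum_derive n (s : seq 'I_n) (F : R -> 'I_n -> R) F' t :
  (forall i, derivable_pt_lim (fun u => F u i) t (F' i)) ->
  derivable_pt_lim (fun u => lsum s (F u)) t (lsum s F').
Proof. intro H. induction s as [|a s IH].
 - rewrite lsum_nil. exact (derivable_pt_lim_const 0 t).
 - rewrite lsum_cons. exact (derivable_pt_lim_plus (fun u => F u a) (fun u => lsum s (F u)) t _ _ (H a) IH). Qed.

Lemma hess_line n (gV : vec n -> vec n) HV (x v : vec n) t :
  (forall i, has_gradient (fun y => gV y i) (fun y => HV y i)) ->
  derivable_pt_lim (fun s => dot (gV (vadd x (vscale s v))) v) t (quadform (HV (vadd x (vscale t v))) v).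
Proof. intro H. rewrite /dot /vsum.
 apply (deriv_val _ _ (lsum (enum 'I_n) (fun i => dot (HV (vadd x (vscale t v)) i) v * v i))).
 - apply (lsum_derive n (enum 'I_n) (fun u i => gV (vadd x (vscale u v)) i * v i)) => i.
   apply (derivable_pt_lim_scal_right (fun u => gV (vadd x (vscale u v)) i)).
   exact (grad_line n (fun y => gV y i) (fun y => HV y i) x v t (H i)).
 - rewrite /quadform dot_lsum. apply lsum_ext => i; ring. Qed.

Lemma decr_lemma F F' a b : a <= b -> (forall c, a <= c <= b -> derivable_pt_lim F c (F' c)) ->
  (forall c, a <= c <= b -> F' c <= 0) -> F b <= F a.
Proof. intros Hab HD Hs. destruct (Rle_lt_or_eq_dec a b Hab) as [Hlt|Heq]; [|rewrite Heq; lra].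
 destruct (MVT_cor2 F F' a b Hlt HD) as [c [Hc Hcab]].
 have := Hs c ltac:(lra). nra. Qed.

Lemma taylor2 n (V : vec n -> R) gV HV (x v : vec n) s M :
  has_gradient V gV -> (forall i, has_gradient (fun y => gV y i) (fun y => HV y i)) -> 0 <= s ->
  (forall th, 0 <= th <= s -> quadform (HV (vadd x (vscale th v))) v <= M) ->
  V (vadd x (vscale s v)) <= V x + s * dot (gV x) v + s * s / 2 * M.
Proof. intros HV1 HV2 Hs HM.
 set g1 := fun u => V (vadd x (vscale u v)).
 set g2 := fun u => dot (gV (vadd x (vscale u v))) v.
 have D1 : forall c, derivable_pt_lim g1 c (g2 c) by intro c; apply grad_line.
 have D2 : forall c, derivable_pt_lim g2 c (quadform (HV (vadd x (vscale c v))) v) by intro c; apply hess_line.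
 set k := fun u => g2 u - g2 0 - u * M.
 have Dk : forall c, derivable_pt_lim k c (quadform (HV (vadd x (vscale c v))) v - M).
 { intro c. apply (deriv_val _ _ ((quadform (HV (vadd x (vscale c v))) v - 0) - (1 * M))); [|ring].
   apply (derivable_pt_lim_minus (fun u => g2 u - g2 0) (fun u => u * M)).
   - apply (derivable_pt_lim_minus g2 (fun _ => g2 0)); [apply D2| apply (derivable_pt_lim_const (g2 0))].
   - apply (derivable_pt_lim_scal_right id). apply derivable_pt_lim_id. }
 have Hk : forall t, 0 <= t <= s -> k t <= 0.
 { intros t Ht. have -> : 0 = k 0 by rewrite /k; ring.
   apply (decr_lemma k (fun c => quadform (HV (vadd x (vscale c v))) v - M) 0 t); [lra| intros; apply Dk|].
   intros c Hc. have := HM c ltac:(lra); lra. }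
 set h := fun u => g1 u - g1 0 - u * g2 0 - u * u / 2 * M.
 have Dh : forall c, derivable_pt_lim h c (k c).
 { intro c. apply (deriv_val _ _ ((g2 c - 0) - 1 * g2 0 - (1 * c + c * 1) / 2 * M)); [|rewrite /k; field].
   apply (derivable_pt_lim_minus (fun u => g1 u - g1 0 - u * g2 0) (fun u => u * u / 2 * M)).
   - apply (derivable_pt_lim_minus (fun u => g1 u - g1 0) (fun u => u * g2 0)).
     + apply (derivable_pt_lim_minus g1 (fun _ => g1 0)); [apply D1| apply (derivable_pt_lim_const (g1 0))].
     + apply (derivable_pt_lim_scal_right id). apply derivable_pt_lim_id.
   - apply (deriv_val _ _ ((1 * c + c * 1) * / 2 * M)); [|field].
     apply (derivable_pt_lim_scal_right (fun u => u * u / 2)).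
     apply (derivable_pt_lim_scal_right (fun u => u * u)).
     apply (derivable_pt_lim_mult id id). all: apply derivable_pt_lim_id. }
 have : h s <= h 0.
 { apply (decr_lemma h k 0 s Hs); [intros; apply Dh| intros; apply Hk; lra]. }
 rewrite /h /g1 /g2 line_0. lra. Qed.


Lemma compact_min n (P : vec n -> Prop) (g : vec n -> R) R0 :
  (forall x, P x -> vnorm x <= R0) ->
  (forall y L, (forall k, P (y k)) -> vcv y L -> P L) ->
  (forall x, P x -> scont g x) -> (forall x, P x -> 0 < g x) ->
  exists c, 0 < c /\ forall x, P x -> c <= g x.
Proof.
 intros Hb Hc Hg Hp. apply NNPP => Hn.
 have Hk : forall k, exists x, P x /\ g x < / (INR k + 1).
 { intro k. apply NNPP => Hk. apply Hn. exists (/ (INR k + 1)); split; [apply inv_pos|].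
   intros x Px. apply Rnot_lt_le => Hlt. apply Hk; exists x; auto. }
 destruct (my_choice _ Hk) as [y Hy].
 destruct (compact_seq n y R0 (fun k => Hb _ (proj1 (Hy k)))) as [phi [L [Hphi HL]]].
 have PL : P L := Hc _ _ (fun k => proj1 (Hy (phi k))) HL.
 have gL := Hp L PL.
 destruct (Hg L PL _ HL (g L / 2) ltac:(lra)) as [N1 HN1].
 destruct (inv_small (g L / 2) ltac:(lra)) as [N2 HN2].
 have h1 := HN1 (Nat.max N1 N2) ltac:(lia).
 have h2 := HN2 (phi (Nat.max N1 N2)) ltac:(have := incr_ge phi Hphi (Nat.max N1 N2); lia).
 have h3 := proj2 (Hy (phi (Nat.max N1 N2))). unfold Rdist in h1. apply Rabs_def2 in h1. simpl in h1. lra.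
Qed.

Lemma compact_max n (P : vec n -> Prop) (g : vec n -> R) R0 :
  (forall x, P x -> vnorm x <= R0) ->
  (forall y L, (forall k, P (y k)) -> vcv y L -> P L) ->
  (forall x, P x -> scont g x) ->
  exists M, forall x, P x -> g x <= M.
Proof.
 intros Hb Hc Hg. apply NNPP => Hn.
 have Hk : forall k, exists x, P x /\ INR k < g x.
 { intro k. apply NNPP => Hk. apply Hn. exists (INR k).
   intros x Px. apply Rnot_lt_le => Hlt. apply Hk; exists x; auto. }
 destruct (my_choice _ Hk) as [y Hy].
 destruct (compact_seq n y R0 (fun k => Hb _ (proj1 (Hy k)))) as [phi [L [Hphi HL]]].
 have PL : P L := Hc _ _ (fun k => proj1 (Hy (phi k))) HL.
 destruct (Hg L PL _ HL 1 Rlt_0_1) as [N1 HN1].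
 destruct (INR_unbounded (g L + 1)) as [m Hm].
 set k := Nat.max N1 m.
 have h1 := HN1 k ltac:(rewrite /k; lia).
 have h2 : INR m <= INR (phi k) by apply le_INR; have := incr_ge phi Hphi k; rewrite /k; lia.
 have h3 := proj2 (Hy (phi k)). unfold Rdist in h1. apply Rabs_def2 in h1. simpl in h1. lra.
Qed.

Lemma closed_norm_between n (a b : R) (y : nat -> vec n) L :
  (forall k, a <= vnorm (y k) <= b) -> vcv y L -> a <= vnorm L <= b.
Proof. intros H HL. have := vnorm_cv n y L HL => Hc. split.
 - exact (Rge_cv_lim_c _ _ _ (fun k => proj1 (H k)) Hc).
 - exact (Rle_cv_lim_c _ _ _ (fun k => proj2 (H k)) Hc). Qed.

Lemma closed_g_between n (g : vec n -> R) (a b : R) (y : nat -> vec n) L :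
  scont g L -> (forall k, a <= g (y k) <= b) -> vcv y L -> a <= g L <= b.
Proof. intros Hg H HL. have := Hg y HL => Hc. split.
 - exact (Rge_cv_lim_c _ _ _ (fun k => proj1 (H k)) Hc).
 - exact (Rle_cv_lim_c _ _ _ (fun k => proj2 (H k)) Hc). Qed.

Lemma hstate_S n (phi : vec n -> R) f u x0 k :
  hstate phi f u x0 (S k) =
  (fst (hstate phi f u x0 k) + phi (snd (hstate phi f u x0 k)) * exp (- u (fst (hstate phi f u x0 k))),
   vadd (snd (hstate phi f u x0 k))
        (vscale (phi (snd (hstate phi f u x0 k)) * exp (- u (fst (hstate phi f u x0 k))))
                (f (snd (hstate phi f u x0 k))))).
Proof. simpl. destruct (hstate phi f u x0 k); reflexivity. Qed.

Lemma exp_neg_le1 a : 0 <= a -> exp (- a) <= 1.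
Proof. intro Ha. rewrite -exp_0. destruct (Req_dec a 0) as [->|Hne]; [rewrite Ropp_0; lra|].
 apply Rlt_le, exp_increasing; lra. Qed.

Lemma tau_nonneg n (phi : vec n -> R) f u x0 r k :
  admissible_input u -> (forall x, 0 < phi x <= r) -> 0 <= fst (hstate phi f u x0 k).
Proof. intros [Hu _] Hp. induction k as [|k IH]; [simpl; lra|].
 rewrite hstate_S /=. have := Hp (snd (hstate phi f u x0 k)).
 have := exp_pos (- u (fst (hstate phi f u x0 k))). nra. Qed.

Lemma traj_step n (phi : vec n -> R) f u x0 r k :
  admissible_input u -> (forall x, 0 < phi x <= r) ->
  0 < fst (hstate phi f u x0 (S k)) - fst (hstate phi f u x0 k) <= phi (snd (hstate phi f u x0 k)) /\
  snd (hstate phi f u x0 (S k)) = vadd (snd (hstate phi f u x0 k))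
     (vscale (fst (hstate phi f u x0 (S k)) - fst (hstate phi f u x0 k)) (f (snd (hstate phi f u x0 k)))).
Proof. intros Hu Hp. have Ht := tau_nonneg n phi f u x0 r k Hu Hp.
 destruct Hu as [Hu _]. rewrite hstate_S /=.
 set t := fst (hstate phi f u x0 k). set x := snd (hstate phi f u x0 k). fold t in Ht.
 have := Hp x. have := exp_neg_le1 (u t) (Hu t Ht). have := exp_pos (- u t).
 intros. split; [split; nra|]. f_equal. f_equal. ring. Qed.


Lemma D_nonpos n (f : vec n -> vec n) V gV : f vzero = vzero -> lyapunov f V gV ->
  forall x, dot (gV x) (f x) <= 0.
Proof. intros Hf0 [_ [_ [_ HL]]] x. destruct (classic (x = vzero)) as [->|Hx].
 - rewrite Hf0 dot_comm dot_zerol; lra.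
 - have := HL x Hx; lra. Qed.

Lemma descent n (f : vec n -> vec n) V gV HV r q lam phi :
  C2_with V gV HV -> f vzero = vzero -> lyapunov f V gV ->
  (forall x, is_max (fun s => exists h, 0 <= h <= r /\
                 s = quadform (HV (vadd x (vscale h (f x)))) (f x)) (q x)) ->
  0 < lam < 1 -> (forall x, 0 < phi x <= r) ->
  (forall x, phi x * q x <= - 2 * (1 - lam) * dot (gV x) (f x)) ->
  forall x s, 0 <= s <= phi x -> V (vadd x (vscale s (f x))) <= V x + s * lam * dot (gV x) (f x).
Proof. intros [HV1 [HV2 _]] Hf0 HL Hq Hlam Hp Hpq x s Hs.
 have Hp' := Hp x. have Hpq' := Hpq x. have HD := D_nonpos n f V gV Hf0 HL x.
 have T := taylor2 n V gV HV x (f x) s (q x) HV1 HV2 ltac:(lra).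
 have T' : V (vadd x (vscale s (f x))) <= V x + s * dot (gV x) (f x) + s * s / 2 * q x.
 { apply T. intros th Hth. apply (proj2 (Hq x)). exists th; split; [lra|reflexivity]. }
 set D := dot (gV x) (f x) in HD Hpq' T' *. clearbody D.
 have h0 : 0 <= s * (1 - lam) by apply Rmult_le_pos; lra.
 have h1 : s * D <= s * lam * D by nra.
 destruct (Rle_lt_dec (q x) 0) as [Hq0|Hq0].
 - have : s * s / 2 * q x <= 0. { have : 0 <= s * s / 2 by nra. nra. }
   lra.
 - have h2 : 0 <= s * q x by nra.
   have h3 : s * s / 2 * q x <= s * phi x * q x / 2 by nra.
   have h4 : s * (phi x * q x) <= s * (- 2 * (1 - lam) * D) by apply Rmult_le_compat_l; lra.
   have h5 : s * (- 2 * (1 - lam) * D) = -2 * (s * (1 - lam)) * D by ring.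
   nra. Qed.

Lemma sol_V n (phi : vec n -> R) f V gV lam r u x0 t y :
  admissible_input u -> (forall x, 0 < phi x <= r) -> 0 < lam ->
  (forall x, dot (gV x) (f x) <= 0) ->
  (forall x s, 0 <= s <= phi x -> V (vadd x (vscale s (f x))) <= V x + s * lam * dot (gV x) (f x)) ->
  sol_at phi f u x0 t y ->
  exists i, fst (hstate phi f u x0 i) <= t /\
    V y <= V (snd (hstate phi f u x0 i)) + (t - fst (hstate phi f u x0 i)) * lam *
           dot (gV (snd (hstate phi f u x0 i))) (f (snd (hstate phi f u x0 i))) /\
    V y <= V (snd (hstate phi f u x0 i)).
Proof. intros Hu Hp Hlam HD Hdesc [i [Ht ->]]. exists i. split; [lra|].
 have [H1 _] := traj_step n phi f u x0 r i Hu Hp.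
 have := Hdesc (snd (hstate phi f u x0 i)) (t - fst (hstate phi f u x0 i)) ltac:(lra).
 have := HD (snd (hstate phi f u x0 i)). intros. split; [lra|].
 have : 0 <= (t - fst (hstate phi f u x0 i)) * lam by apply Rmult_le_pos; lra. nra. Qed.

Lemma V_step n (phi : vec n -> R) f V gV lam r u x0 i :
  admissible_input u -> (forall x, 0 < phi x <= r) ->
  (forall x s, 0 <= s <= phi x -> V (vadd x (vscale s (f x))) <= V x + s * lam * dot (gV x) (f x)) ->
  V (snd (hstate phi f u x0 (S i))) <= V (snd (hstate phi f u x0 i)) +
     (fst (hstate phi f u x0 (S i)) - fst (hstate phi f u x0 i)) * lam *
       dot (gV (snd (hstate phi f u x0 i))) (f (snd (hstate phi f u x0 i))).
Proof. intros Hu Hp Hdesc. have [H1 H2] := traj_step n phi f u x0 r i Hu Hp.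
 rewrite H2. apply Hdesc; lra. Qed.

Lemma V_mono n (phi : vec n -> R) f V gV lam r u x0 i :
  admissible_input u -> (forall x, 0 < phi x <= r) -> 0 < lam ->
  (forall x, dot (gV x) (f x) <= 0) ->
  (forall x s, 0 <= s <= phi x -> V (vadd x (vscale s (f x))) <= V x + s * lam * dot (gV x) (f x)) ->
  V (snd (hstate phi f u x0 i)) <= V x0.
Proof. intros Hu Hp Hlam HD Hdesc. induction i as [|i IH]; [simpl; lra|].
 have := V_step n phi f V gV lam r u x0 i Hu Hp Hdesc.
 have [H1 _] := traj_step n phi f u x0 r i Hu Hp.
 have := HD (snd (hstate phi f u x0 i)).
 have : 0 <= (fst (hstate phi f u x0 (S i)) - fst (hstate phi f u x0 i)) * lam by apply Rmult_le_pos; lra.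
 intros; nra. Qed.

Lemma K1 n (f : vec n -> vec n) V gV : lyapunov f V gV -> (forall x, scont V x) ->
  forall eps, 0 < eps -> exists b, 0 < b /\ forall y, eps <= vnorm y -> b <= V y.
Proof. intros [HV0 [Hpos [Hrad _]]] Hc eps He. destruct (Hrad 1) as [R1 HR1].
 destruct (compact_min n (fun y => eps <= vnorm y <= R1) V R1) as [c [Hc0 Hc1]].
 - intros x Hx; lra.
 - intros y L Hy HL; exact (closed_norm_between n _ _ y L Hy HL).
 - intros; apply Hc.
 - intros x Hx. apply Hpos => Hx0. rewrite Hx0 vnorm_zero in Hx. lra.
 - exists (Rmin c 1); split; [apply Rmin_pos; lra|]. intros y Hy.
   destruct (Rle_lt_dec R1 (vnorm y)) as [H|H].
   + have := HR1 y H; have := Rmin_r c 1; lra.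
   + have := Hc1 y ltac:(lra); have := Rmin_l c 1; lra. Qed.

Lemma K3 n (V : vec n -> R) : (forall x, scont V x) ->
  forall R0, exists M, forall x, vnorm x <= R0 -> V x <= M.
Proof. intros Hc R0. destruct (compact_max n (fun y => 0 <= vnorm y <= R0) V R0) as [M HM].
 - intros x Hx; lra.
 - intros y L Hy HL; exact (closed_norm_between n _ _ y L Hy HL).
 - intros; apply Hc.
 - exists M => x Hx. apply HM. have := vnorm_pos n x; lra. Qed.

Lemma K2 n (f : vec n -> vec n) V gV : lyapunov f V gV -> (forall x, scont V x) ->
  (forall x, scont (fun y => dot (gV y) (f y)) x) ->
  forall b M0, 0 < b -> exists c, 0 < c /\ forall y, b <= V y <= M0 -> dot (gV y) (f y) <= - c.
Proof. intros HL Hc HDc b M0 Hb. destruct HL as [HV0 [Hpos [Hrad HD]]].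
 destruct (Hrad (M0 + 1)) as [R1 HR1].
 destruct (compact_min n (fun y => b <= V y <= M0) (fun y => - dot (gV y) (f y)) R1) as [c [Hc0 Hc1]].
 - intros x Hx. apply Rnot_lt_le => H. have := HR1 x ltac:(lra). lra.
 - intros y L Hy HL. exact (closed_g_between n V _ _ y L (Hc L) Hy HL).
 - intros x _ y Hy. apply CV_opp. exact (HDc x y Hy).
 - intros x Hx. have : x <> vzero by intro E; rewrite E HV0 in Hx; lra.
   intro Hx0; have := HD x Hx0; lra.
 - exists c; split; auto. intros y Hy; have := Hc1 y Hy; lra. Qed.

Lemma urgas_main n (f : vec n -> vec n) V gV phi r lam :
  lyapunov f V gV -> (forall x, 0 <= V x) -> (forall x, scont V x) ->
  (forall x, scont (fun y => dot (gV y) (f y)) x) ->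
  0 < lam -> (forall x, 0 < phi x <= r) -> (forall x, dot (gV x) (f x) <= 0) ->
  (forall x s, 0 <= s <= phi x -> V (vadd x (vscale s (f x))) <= V x + s * lam * dot (gV x) (f x)) ->
  URGAS phi f.
Proof. intros HL HVp HVc HDc Hlam Hp HD Hdesc.
 have HK1 := K1 n f V gV HL HVc. have HK2 := K2 n f V gV HL HVc HDc. have HK3 := K3 n V HVc.
 have HV0 : V vzero = 0 by destruct HL.
 have Hsmall : forall eps b, (forall y, eps <= vnorm y -> b <= V y) -> forall y, V y < b -> vnorm y < eps.
 { intros eps b H y Hy. apply Rnot_le_lt => H2. have := H y H2. lra. }
 split; [|split].
 - intros eps He. destruct (HK1 eps He) as [b [Hb HbV]].
   have Hct := scont_ctsat n V vzero (HVc vzero).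
   destruct (Hct b Hb) as [d' [Hd' Hdd']]. exists d'; split; auto.
   intros x0 u t y Hu Hx0 Ht Hsol.
   destruct (sol_V n phi f V gV lam r u x0 t y Hu Hp Hlam HD Hdesc Hsol) as [i [_ [_ Hyi]]].
   have := V_mono n phi f V gV lam r u x0 i Hu Hp Hlam HD Hdesc.
   have := Hdd' x0 ltac:(rewrite vsub_zero; exact Hx0). rewrite HV0 Rminus_0_r.
   intros Habs Hm. apply (Hsmall eps b HbV). have := Rle_abs (V x0). lra.
 - intros Rr HRr. destruct (HK3 Rr) as [M0 HM0]. destruct HL as [_ [_ [Hrad _]]].
   destruct (Hrad (M0 + 1)) as [R1 HR1]. exists R1.
   intros x0 u t y Hu Hx0 Ht Hsol.
   destruct (sol_V n phi f V gV lam r u x0 t y Hu Hp Hlam HD Hdesc Hsol) as [i [_ [_ Hyi]]].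
   have := V_mono n phi f V gV lam r u x0 i Hu Hp Hlam HD Hdesc.
   have := HM0 x0 Hx0. intros. apply Rnot_lt_le => Hn. have := HR1 y ltac:(lra). lra.
 - intros eps Rr He HRr. destruct (HK1 eps He) as [b [Hb HbV]].
   destruct (HK3 Rr) as [M0 HM0].
   destruct (HK2 b M0 Hb) as [c [Hc HcD]].
   exists (Rmax 0 (M0 / (lam * c))).
   intros x0 u t y Hu Hx0 HT Hsol.
   have Hlc : 0 < lam * c by apply Rmult_lt_0_compat.
   have Ht : M0 / (lam * c) <= t by have := Rmax_r 0 (M0 / (lam * c)); lra.
   have Ht0 : 0 <= t by have := Rmax_l 0 (M0 / (lam * c)); lra.
   have HM0t : M0 - lam * c * t <= 0.
   { have : M0 <= t * (lam * c).
     { apply (Rmult_le_reg_r (/ (lam * c))); [apply Rinv_0_lt_compat; lra|].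
       rewrite Rmult_assoc Rinv_r; [|lra]. rewrite Rmult_1_r. exact Ht. }
     lra. }
   have Vx0 := HM0 x0 Hx0.
   have Inv : forall i, V (snd (hstate phi f u x0 i)) < b \/
              V (snd (hstate phi f u x0 i)) <= M0 - lam * c * fst (hstate phi f u x0 i).
   { induction i as [|i IH].
     - right; simpl; lra.
     - have Hst := V_step n phi f V gV lam r u x0 i Hu Hp Hdesc.
       have [H1 _] := traj_step n phi f u x0 r i Hu Hp.
       have HDi := HD (snd (hstate phi f u x0 i)).
       have Hti := tau_nonneg n phi f u x0 r i Hu Hp.
       have Hpl : 0 <= (fst (hstate phi f u x0 (S i)) - fst (hstate phi f u x0 i)) * lam
         by apply Rmult_le_pos; lra.
       destruct (Rlt_le_dec (V (snd (hstate phi f u x0 i))) b) as [Hlt|Hge].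
       + left. nra.
       + right. destruct IH as [IH|IH]; [lra|].
         have Hc' := HcD (snd (hstate phi f u x0 i)) ltac:(split; [exact Hge| have : 0 <= lam * c * fst (hstate phi f u x0 i) by apply Rmult_le_pos; lra; lra]).
         nra. }
   apply Rlt_le. apply (Hsmall eps b HbV).
   destruct Hsol as [i [Hti Hy]].
   have Hsol' : sol_at phi f u x0 t y by exists i; split; auto.
   have [H1 _] := traj_step n phi f u x0 r i Hu Hp.
   have HDi := HD (snd (hstate phi f u x0 i)).
   have Hti0 := tau_nonneg n phi f u x0 r i Hu Hp.
   have Hdi := Hdesc (snd (hstate phi f u x0 i)) (t - fst (hstate phi f u x0 i)) ltac:(lra).
   rewrite -Hy in Hdi.
   have Hpl : 0 <= (t - fst (hstate phi f u x0 i)) * lam by apply Rmult_le_pos; lra.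
   destruct (Inv i) as [Hl|Hr].
   + nra.
   + destruct (Rlt_le_dec (V (snd (hstate phi f u x0 i))) b) as [Hlt|Hge]; [nra|].
     have Hc' := HcD (snd (hstate phi f u x0 i)) ltac:(split; [exact Hge| have : 0 <= lam * c * fst (hstate phi f u x0 i) by apply Rmult_le_pos; lra; lra]).
     nra. Qed.


Lemma CV_abs (a : nat -> R) A : Un_cv a A -> Un_cv (fun k => Rabs (a k)) (Rabs A).
Proof. intro H. exact (continuity_seq Rabs a A (Rcontinuity_abs A) H). Qed.

Lemma CV_inv (a : nat -> R) A : Un_cv a A -> A <> 0 -> Un_cv (fun k => / a k) (/ A).
Proof. intros H HA.
 have Hc : continuity_pt (fun x => / x) A.
 { apply (continuity_pt_inv id A); [apply derivable_continuous_pt, derivable_id| exact HA]. }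
 exact (continuity_seq (fun x => / x) a A Hc H). Qed.

Lemma Rmax_formula a b : Rmax a b = (a + b + Rabs (a - b)) / 2.
Proof. unfold Rmax, Rabs; destruct (Rle_dec a b); destruct (Rcase_abs (a - b)); lra. Qed.
Lemma Rmin_formula a b : Rmin a b = (a + b - Rabs (a - b)) / 2.
Proof. unfold Rmin, Rabs; destruct (Rle_dec a b); destruct (Rcase_abs (a - b)); lra. Qed.

Lemma CV_div2 (a : nat -> R) A : Un_cv a A -> Un_cv (fun k => a k / 2) (A / 2).
Proof. intro H. apply (CV_mult a (fun _ => / 2)); [exact H| apply CV_const]. Qed.

Lemma CV_max (a b : nat -> R) A B : Un_cv a A -> Un_cv b B -> Un_cv (fun k => Rmax (a k) (b k)) (Rmax A B).
Proof. intros Ha Hb. rewrite Rmax_formula.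
 apply (Un_cv_ext (fun k => (a k + b k + Rabs (a k - b k)) / 2)); [intro k; rewrite Rmax_formula //|].
 apply CV_div2, CV_plus; [apply CV_plus; auto| apply CV_abs, CV_minus; auto]. Qed.

Lemma CV_min (a b : nat -> R) A B : Un_cv a A -> Un_cv b B -> Un_cv (fun k => Rmin (a k) (b k)) (Rmin A B).
Proof. intros Ha Hb. rewrite Rmin_formula.
 apply (Un_cv_ext (fun k => (a k + b k - Rabs (a k - b k)) / 2)); [intro k; rewrite Rmin_formula //|].
 apply CV_div2, CV_minus; [apply CV_plus; auto| apply CV_abs, CV_minus; auto]. Qed.

Lemma quad_cv n (HV : vec n -> 'I_n -> vec n) (w v : nat -> vec n) W Vv :
  (forall i j, vcont (fun x => HV x i j)) -> vcv w W -> vcv v Vv ->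
  Un_cv (fun k => quadform (HV (w k)) (v k)) (quadform (HV W) Vv).
Proof. intros Hc Hw Hv. rewrite /quadform. apply dot_cv; [exact Hv|].
 apply coord_vcv => i. apply dot_cv; [|exact Hv].
 apply coord_vcv => j. exact (vcont_scont n (fun x => HV x i j) W (Hc i j) w Hw). Qed.

Lemma G_cv n (f : vec n -> vec n) (HV : vec n -> 'I_n -> vec n) (y : nat -> vec n) z h hh :
  loc_lipschitz f -> (forall i j, vcont (fun x => HV x i j)) -> vcv y z -> Un_cv h hh ->
  Un_cv (fun k => quadform (HV (vadd (y k) (vscale (h k) (f (y k))))) (f (y k)))
        (quadform (HV (vadd z (vscale hh (f z)))) (f z)).
Proof. intros Hf Hc Hy Hh. have Hfy := loclip_svcont n f z Hf y Hy.
 apply quad_cv; auto. apply vadd_cv; [exact Hy| apply vscale_cv; auto]. Qed.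

Lemma q_scont n (f : vec n -> vec n) (HV : vec n -> 'I_n -> vec n) r q x :
  loc_lipschitz f -> (forall i j, vcont (fun x => HV x i j)) ->
  (forall x, is_max (fun s => exists h, 0 <= h <= r /\
                 s = quadform (HV (vadd x (vscale h (f x)))) (f x)) (q x)) ->
  scont q x.
Proof. intros Hf Hc Hq y Hy e He.
 destruct (proj1 (Hq x)) as [hx [Hhx Eq]].
 have Hl := G_cv n f HV y x (fun _ => hx) hx Hf Hc Hy (CV_const hx).
 rewrite -Eq in Hl. destruct (Hl e He) as [N1 HN1].
 have Hup : exists N2, forall k, (k >= N2)%coq_nat -> q (y k) < q x + e.
 { apply NNPP => Hn.
   have Hio : forall (m N : nat), exists k, (N <= k)%coq_nat /\ q x + e <= q (y k).
   { intros m N. apply NNPP => H. apply Hn. exists N => k Hk. apply Rnot_le_lt => H2. apply H; exists k; split; auto. }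
   destruct (io_subseq _ Hio) as [psi [Hpsi Hp]].
   have Hh : forall k, exists hk, 0 <= hk <= r /\ q (y (psi k)) = quadform (HV (vadd (y (psi k)) (vscale hk (f (y (psi k)))))) (f (y (psi k))).
   { intro k. exact (proj1 (Hq (y (psi k)))). }
   destruct (my_choice _ Hh) as [hs Hhs].
   destruct (BW1 hs 0 r (fun k => proj1 (Hhs k))) as [chi [l [Hchi [Hcl Hl0r]]]].
   have Hy2 : vcv (fun k => y (psi (chi k))) x := vcv_sub n _ x chi Hchi (vcv_sub n y x psi Hpsi Hy).
   have HG := G_cv n f HV _ x _ l Hf Hc Hy2 Hcl.
   have Hle : quadform (HV (vadd x (vscale l (f x)))) (f x) <= q x.
   { apply (proj2 (Hq x)). exists l; split; auto. }
   have Hge : q x + e <= quadform (HV (vadd x (vscale l (f x)))) (f x).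
   { refine (Rge_cv_lim_c _ _ _ _ HG) => k. simpl. rewrite -(proj2 (Hhs (chi k))). apply Hp. }
   lra. }
 destruct Hup as [N2 HN2]. exists (Nat.max N1 N2) => k Hk.
 have h1 := HN1 k ltac:(lia). have h2 := HN2 k ltac:(lia).
 have h3 : quadform (HV (vadd (y k) (vscale hx (f (y k))))) (f (y k)) <= q (y k).
 { apply (proj2 (Hq (y k))). exists hx; split; auto. }
 unfold Rdist in *. apply Rabs_def2 in h1. apply Rabs_def1; lra. Qed.


Lemma div_lt1 a b : 0 < b -> a < b -> a / b < 1.
Proof. intros Hb Hab. apply (Rmult_lt_reg_r b); [lra|]. unfold Rdiv; rewrite Rmult_assoc Rinv_l; lra. Qed.
Lemma div_ge1 a b : 0 < b -> b <= a -> 1 <= a / b.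
Proof. intros Hb Hab. apply (Rmult_le_reg_r b); [lra|]. unfold Rdiv; rewrite Rmult_assoc Rinv_l; lra. Qed.
Lemma div_nonneg a b : 0 <= a -> 0 < b -> 0 <= a / b.
Proof. intros; apply Rmult_le_pos; [lra| apply Rlt_le, Rinv_0_lt_compat; lra]. Qed.
Lemma div_pos' a b : 0 < a -> 0 < b -> 0 < a / b.
Proof. intros; apply Rdiv_lt_0_compat; lra. Qed.
Lemma div_mul_le g Q q : 0 <= g -> 0 < q -> q <= Q -> g / (Q + 1) * q <= g.
Proof. intros Hg Hq HQ. have HQ1 : 0 < Q + 1 by lra.
 have -> : g / (Q + 1) * q = g * (q / (Q + 1)) by field; lra.
 have : q / (Q + 1) <= 1.
 { apply (Rmult_le_reg_r (Q + 1)); [lra|]. unfold Rdiv; rewrite Rmult_assoc Rinv_l; lra. }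
 have : 0 <= q / (Q + 1) by apply div_nonneg; lra. nra. Qed.

Theorem corollary4p7 (n : nat) (f : vec n -> vec n) (V : vec n -> R)
    (gV : vec n -> vec n) (HV : vec n -> 'I_n -> vec n) (r : R) (q : vec n -> R)
    (delta lambda : R) :
  loc_lipschitz f ->
  f vzero = vzero ->
  C2_with V gV HV ->
  (forall x, 0 <= V x) ->
  lyapunov f V gV ->
  0 < r ->
  (forall x, is_max (fun s => exists h, 0 <= h <= r /\
                 s = quadform (HV (vadd x (vscale h (f x)))) (f x)) (q x)) ->
  0 < delta -> delta <= r ->
  0 < lambda < 1 ->
  (exists rho, 0 < rho /\ forall x, vnorm x < rho ->
      delta * q x <= - 2 * (1 - lambda) * dot (gV x) (f x)) ->
  (exists phi : vec n -> R, vcont phi /\ (forall x, 0 < phi x <= r) /\ URGAS phi f) /\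
  (forall phi : vec n -> R, vcont phi -> (forall x, 0 < phi x <= r) ->
      (forall x, phi x * q x <= - 2 * (1 - lambda) * dot (gV x) (f x)) ->
      URGAS phi f).
Proof.
 intros Hf Hf0 HC2 HVp HL Hr Hq Hd Hdr Hlam [rho [Hrho Hnear]].
 have HC2' := HC2. destruct HC2' as [HV1 [HV2 HV3]].
 have HVc : forall x, scont V x := fun x => grad_scont n V gV x HV1.
 have HgVc : forall x, svcont gV x := fun x => comp_svcont n gV x (fun i => grad_scont n _ _ x (HV2 i)).
 have Hfc : forall x, svcont f x := fun x => loclip_svcont n f x Hf.
 have HDc : forall x, scont (fun y => dot (gV y) (f y)) x :=
   fun x y Hy => dot_cv n _ _ _ _ (HgVc x y Hy) (Hfc x y Hy).
 have HD := D_nonpos n f V gV Hf0 HL.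
 have Part2 : forall phi : vec n -> R, vcont phi -> (forall x, 0 < phi x <= r) ->
      (forall x, phi x * q x <= - 2 * (1 - lambda) * dot (gV x) (f x)) -> URGAS phi f.
 { intros phi _ Hp Hpq. apply (urgas_main n f V gV phi r lambda HL HVp HVc HDc ltac:(lra) Hp HD).
   exact (descent n f V gV HV r q lambda phi HC2 Hf0 HL Hq Hlam Hp Hpq). }
 split; [|exact Part2].
 pose phi := fun x => Rmin delta (delta * Rmax 0 (1 - vnorm x / rho) +
                (- 2 * (1 - lambda) * dot (gV x) (f x)) / (Rmax 0 (q x) + 1)).
 have Hg : forall x, 0 <= - 2 * (1 - lambda) * dot (gV x) (f x) by intro x; have := HD x; nra.
 have HQ : forall x, 0 < Rmax 0 (q x) + 1 by intro x; have := Rmax_l 0 (q x); lra.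
 have Hpos : forall x, 0 < phi x <= r.
 { intro x. rewrite /phi. split; [|have := Rmin_l delta (delta * Rmax 0 (1 - vnorm x / rho) +
                (- 2 * (1 - lambda) * dot (gV x) (f x)) / (Rmax 0 (q x) + 1)); lra].
   apply Rmin_glb_lt; [exact Hd|].
   have h1 := div_nonneg _ _ (Hg x) (HQ x).
   have h2 := Rmax_l 0 (1 - vnorm x / rho).
   destruct (Rlt_le_dec (vnorm x) rho) as [Hx|Hx].
   - have := div_lt1 _ _ Hrho Hx. have := Rmax_r 0 (1 - vnorm x / rho). intros. nra.
   - have Hx0 : x <> vzero by intro E; rewrite E vnorm_zero in Hx; lra.
     have := proj2 (proj2 (proj2 HL)) x Hx0. intro HDx.
     have : 0 < - 2 * (1 - lambda) * dot (gV x) (f x) by nra.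
     intro Hgp. have := div_pos' _ _ Hgp (HQ x). nra. }
 have Hcont : vcont phi.
 { intro x. apply scont_ctsat. intros y Hy. rewrite /phi.
   apply (CV_min (fun _ => delta)); [apply CV_const|].
   apply CV_plus.
   + apply (CV_mult (fun _ => delta)); [apply CV_const|].
     apply (CV_max (fun _ => 0)); [apply CV_const|].
     apply (CV_minus (fun _ => 1)); [apply CV_const|].
     apply (CV_mult (fun k => vnorm (y k)) (fun _ => / rho)); [apply vnorm_cv; exact Hy| apply CV_const].
   + apply CV_mult.
     * apply (CV_mult (fun _ => - 2 * (1 - lambda))); [apply CV_const| exact (HDc x y Hy)].
     * apply CV_inv; [|have := HQ x; lra].
       apply CV_plus; [|apply CV_const].
       apply (CV_max (fun _ => 0)); [apply CV_const|].
       exact (q_scont n f HV r q x Hf HV3 Hq y Hy). }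
 exists phi; split; [exact Hcont|split; [exact Hpos|]].
 apply Part2; [exact Hcont| exact Hpos|].
   intro x. rewrite /phi. set T := delta * Rmax 0 (1 - vnorm x / rho) +
                (- 2 * (1 - lambda) * dot (gV x) (f x)) / (Rmax 0 (q x) + 1).
     destruct (Rle_lt_dec (q x) 0) as [Hq0|Hq0].
     * have := Hpos x. rewrite /phi -/T. intros. have := Hg x. nra.
     * destruct (Rlt_le_dec (vnorm x) rho) as [Hx|Hx].
       -- have := Hnear x Hx. have := Rmin_l delta T. have := Hpos x. rewrite /phi -/T. intros. nra.
       -- have Ha : Rmax 0 (1 - vnorm x / rho) = 0.
          { apply Rmax_left. have := div_ge1 _ _ Hrho Hx; lra. }
          have HT : T = (- 2 * (1 - lambda) * dot (gV x) (f x)) / (Rmax 0 (q x) + 1)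
            by rewrite /T Ha; ring.
          have := div_mul_le _ (Rmax 0 (q x)) (q x) (Hg x) Hq0 (Rmax_r 0 (q x)).
          have := Rmin_r delta T. have := Hpos x. rewrite /phi -/T. rewrite -HT. intros. nra.
Qed.
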